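(* Let $K$ be a field of characteristic zero, let $u,v,\ell\in K[X]$ be of degree one, and let $F=u\circ X^d\circ v$ where $d>1$. The following are equivalent: (1) the equation $F\circ\ell\circ F\circ b=a\circ F\circ F$ has infinitely many solutions in degree-one polynomials $a,b\in K[X]$; (2) $F=v^{-1}\circ\epsilon X^d\circ v$ and $\ell=v^{-1}\circ\delta X\circ v$ for some $\epsilon,\delta\in K^*$.
   Context: $\circ$ denotes composition of polynomials; $v^{-1}$ is the compositional inverse of $v$. *)

(* Defs.v *)
From HB Require Import structures.
From mathcomp Require Import all_boot all_order all_algebra.
Set Implicit Arguments. Unset Strict Implicit. Unset Printing Implicit Defensive.
Import GRing.Theory.
Local Open Scope ring_scope.

(* Compositional inverse of a degree-one polynomial v = c1 X + c0 (c1 != 0):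
   v^{-1} = c1^{-1} (X - c0), so that v^{-1} \Po v = X = v \Po v^{-1}. *)
Definition lin_inv (K : fieldType) (v : {poly K}) : {poly K} :=
  (lead_coef v)^-1 *: ('X - (v`_0)%:P).

(* Main.v *)
Require Import Defs.
From HB Require Import structures.
From mathcomp Require Import all_boot all_order all_algebra.
From mathcomp Require Import ring zify.
From Stdlib Require Import Lia.
From Stdlib Require Classical_Prop.
Import GRing.Theory.
Local Open Scope ring_scope.

Section H.
Variable K : fieldType.
Implicit Types (P Q w H : {poly K}) (r s : K).

Lemma linE w : size w = 2%N -> w = w`_1 *: 'X + (w`_0)%:P.
Proof.
move=> sw; apply/polyP => i; rewrite coefD coefZ coefX coefC.
case: i => [|[|i]] /=; rewrite ?mulr0 ?mulr1 ?add0r ?addr0 //.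
by rewrite nth_default // sw.
Qed.

Lemma lin_neq0 w : size w = 2%N -> w`_1 != 0.
Proof. by move=> sw; have := lead_coef_eq0 w; rewrite lead_coefE sw /= => ->; rewrite -size_poly_eq0 sw. Qed.

Lemma lin_comp w H : size w = 2%N -> w \Po H = w`_1 *: H + (w`_0)%:P.
Proof. by move=> sw; rewrite {1}(linE _ sw) comp_polyD comp_polyZ comp_polyX comp_polyC. Qed.

Lemma size_lin r s : r != 0 -> size (r *: 'X + s%:P) = 2%N.
Proof.
move=> r0; rewrite size_polyDl (size_scale _ r0) ?size_polyX // size_polyC.
by case: (s != 0).
Qed.

Lemma lin_coef1 r s : (r *: 'X + s%:P)`_1 = r.
Proof. by rewrite coefD coefZ coefX coefC /= mulr1 addr0. Qed.
Lemma lin_coef0 r s : (r *: 'X + s%:P)`_0 = s.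
Proof. by rewrite coefD coefZ coefX coefC /= mulr0 add0r. Qed.

Lemma size_linXn r s n : (size ((r *: 'X + s%:P) ^+ n)%R <= n.+1)%N.
Proof.
rewrite (leq_trans (size_poly_exp_leq _ _)) // ltnS.
have : (size (r *: 'X + s%:P)%R <= 2)%N.
  rewrite (leq_trans (size_polyD _ _)) // geq_max (leq_trans (size_scale_leq _ _)) ?size_polyX //.
  by rewrite size_polyC; case: (s != 0).
by case: (size _) => [|[|[|]]] //= _; rewrite ?mul0n ?mul1n.
Qed.

Lemma linXn_E r s m : ((r *: 'X + s%:P) ^+ m.+1) = r *: ((r *: 'X + s%:P) ^+ m * 'X) + s *: (r *: 'X + s%:P) ^+ m.
Proof. by rewrite exprSr mulrDr -scalerAr -[s *: _]mul_polyC [s%:P * _]mulrC. Qed.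

Lemma coef_linXn_top r s n : ((r *: 'X + s%:P) ^+ n)`_n = r ^+ n.
Proof.
elim: n => [|n IH]; first by rewrite expr0 coefC.
rewrite linXn_E coefD !coefZ coefMX /= IH nth_default ?mulr0 ?addr0 ?exprS //.
exact: size_linXn.
Qed.

Lemma coef_linXn_sub r s n :
  ((r *: 'X + s%:P) ^+ n.+1)`_n = n.+1%:R * r ^+ n * s.
Proof.
elim: n => [|n IH]; first by rewrite expr1 lin_coef0 expr0 mulr1 mul1r.
rewrite linXn_E coefD !coefZ coefMX /= IH coef_linXn_top exprS.
rewrite -[n.+2]addn1 natrD; ring.
Qed.
End H.


Section H2.
Variable K : fieldType.
Implicit Types (P Q w H : {poly K}) (r s : K).

Lemma coef_comp_lin P n r s : (size P <= n.+2)%N ->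
  (P \Po (r *: 'X + s%:P))`_n = P`_n * r ^+ n + P`_n.+1 * (n.+1%:R * r ^+ n * s).
Proof.
move=> sP.
have eP : P = \poly_(i < n.+2) P`_i.
  apply/polyP => i; rewrite coef_poly; case: ltnP => // h.
  by rewrite nth_default // (leq_trans sP h).
rewrite {1}eP poly_def linear_sum /= coef_sum !big_ord_recr /= big1 ?add0r.
  rewrite !comp_polyZ !coefZ !comp_Xn_poly coef_linXn_sub coef_linXn_top.
  by [].
move=> [i hi] _ /=; rewrite comp_polyZ coefZ comp_Xn_poly.
by rewrite (nth_default 0 (leq_trans (size_linXn _ _ _ _) hi)) mulr0.
Qed.
End H2.


Section H3.
Variable K : fieldType.
Hypothesis charK : [pchar K] =i pred0.
Implicit Types (P Q w H : {poly K}) (r s : K).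

Lemma natr_neq0 n : (n != 0)%N -> (n%:R : K) != 0.
Proof. by move: charK => /pcharf0P ->. Qed.

Lemma comp_polyXn_l Q R k : (Q ^+ k) \Po R = (Q \Po R) ^+ k.
Proof.
elim: k => [|k IH]; first by rewrite !expr0 -polyC1 comp_polyC.
by rewrite !exprS comp_polyM IH.
Qed.

Lemma comp_Xn_inj Q1 Q2 d : (0 < d)%N -> Q1 \Po 'X^d = Q2 \Po 'X^d -> Q1 = Q2.
Proof.
move=> d0 E; apply/polyP => i.
have := congr1 (fun P => P`_(i * d)) E => /=.
by rewrite !coef_comp_poly_Xn // dvdn_mull // mulnK.
Qed.

Lemma ndvd e : ~~ (e.+2 %| (e.+2 * e.+2).-1)%N.
Proof.
have -> : ((e.+2 * e.+2).-1 = e.+2 * e.+1 + e.+1)%N.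
  by rewrite !mulSn !mulnS; lia.
rewrite dvdn_addr ?dvdn_mulr //; apply/negP => /dvdn_leq.
by rewrite ltnn => /(_ isT).
Qed.

Lemma key e (α β p q a1 c0 r s : K) : α != 0 -> p != 0 -> r != 0 ->
  (p *: (r *: 'X + s%:P) ^+ e.+2 + q%:P) ^+ e.+2
    = a1 *: (α *: 'X^(e.+2) + β%:P) ^+ e.+2 + c0%:P ->
  s = 0 /\ q * α = p * r ^+ e.+2 * β.
Proof.
move=> α0 p0 r0 E.
set d := e.+2 in E *.
set A := (p *: 'X + q%:P) ^+ d.
set B := a1 *: (α *: 'X + β%:P) ^+ d + c0%:P.
have EA : (p *: (r *: 'X + s%:P) ^+ d + q%:P) ^+ d = (A \Po 'X^d) \Po (r *: 'X + s%:P).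
  rewrite -comp_polyA comp_Xn_poly /A comp_polyXn_l.
  by rewrite comp_polyD comp_polyZ comp_polyX comp_polyC.
have EB : a1 *: (α *: 'X^d + β%:P) ^+ d + c0%:P = B \Po 'X^d.
  rewrite /B comp_polyD comp_polyZ comp_polyC comp_polyXn_l.
  by rewrite comp_polyD comp_polyZ comp_polyX comp_polyC.
have s0 : s = 0.
  have [n hn] : exists n, (d * d)%N = n.+1 by exists (d * d).-1; rewrite /d; lia.
  have := congr1 (fun P => P`_n) E; rewrite EA EB.
  have sA : (size (A \Po 'X^d) <= n.+2)%N.
    rewrite -hn (leq_trans (size_comp_poly_leq _ _)) // size_polyXn /= ltnS leq_mul2r.
    by apply/orP; right; move: (size_linXn _ p q d); rewrite -/A; case: (size A).
  rewrite coef_comp_lin // -hn !coef_comp_poly_Xn // hn.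
  have hd : ~~ (d %| n)%N by have := ndvd e; rewrite -/d hn.
  rewrite (negPf hd) -hn dvdn_mull // mulnK // /A coef_linXn_top mul0r add0r => /eqP.
  have hp : p ^+ d != 0 := expf_neq0 _ p0.
  have hr : r ^+ n != 0 := expf_neq0 _ r0.
  have hdd : (d * d)%:R != 0 :> K by rewrite natr_neq0 // /d.
  by rewrite mulf_eq0 (negPf hp) /= !mulf_eq0 (negPf hr) (negPf hdd) /= => /eqP.
split=> //; move: E; rewrite s0 polyC0 addr0 => E.
set P := p * r ^+ d.
have E1 : (p *: (r *: 'X) ^+ d + q%:P) ^+ d = ((P *: 'X + q%:P) ^+ d) \Po 'X^d.
  rewrite comp_polyXn_l comp_polyD comp_polyZ comp_polyX comp_polyC.
  by rewrite exprZn scalerA.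
move: E; rewrite E1 EB => /comp_Xn_inj => /(_ isT) EC.
have h1 := congr1 (fun P => P`_d) EC; rewrite /= coef_linXn_top /B coefD coefZ coefC coef_linXn_top /= addr0 in h1.
have h2 := congr1 (fun P => P`_e.+1) EC; rewrite /= coef_linXn_sub /B coefD coefZ coefC coef_linXn_sub /= addr0 in h2.
have hP : P != 0 by rewrite mulf_neq0 // expf_neq0.
have hc : e.+2%:R * P ^+ e.+1 != 0 by rewrite mulf_neq0 ?natr_neq0 // expf_neq0.
apply: (mulfI hc).
have -> : e.+2%:R * P ^+ e.+1 * (q * α) = (e.+2%:R * P ^+ e.+1 * q) * α by ring.
have -> : e.+2%:R * P ^+ e.+1 * (P * β) = e.+2%:R * P ^+ e.+2 * β by rewrite [P ^+ e.+2]exprS; ring.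
rewrite h2 h1 /d [α ^+ e.+2]exprSr; ring.
Qed.
End H3.


Section H4.
Variable K : fieldType.
Hypothesis charK : [pchar K] =i pred0.
Implicit Types (P Q w H : {poly K}) (r s : K).



Lemma natr_inj m n : (m%:R : K) = n%:R -> m = n.
Proof.
wlog mn : m n / (m <= n)%N.
  by move=> W E; case: (leqP m n) => h; [apply: W | symmetry; apply: W => //; apply: ltnW].
move=> E; have : ((n - m)%:R : K) = 0 by rewrite natrB // E subrr.
case: (eqVneq (n - m)%N 0%N) => [h _|h]; first by lia.
by move/eqP; rewrite (negPf (@natr_neq0 K charK _ h)).
Qed.

Lemma fresh (L : seq K) : exists r, r != 0 /\ r \notin L.
Proof.
set T := [seq (k.+1)%:R : K | k <- iota 0 (size L).+1].
have uT : uniq T.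
  rewrite map_inj_uniq ?iota_uniq // => i j /natr_inj; case.
  by [].
case: (boolP (all (fun x => x \in L) T)) => [/allP hall|].
  have := uniq_leq_size uT hall; rewrite size_map size_iota ltnn //.
case/allPn => r /mapP [k _ ->] hk; exists (k.+1)%:R; split => //.
exact: (@natr_neq0 K charK).
Qed.
End H4.


Section H5.
Variable K : fieldType.
Variable v : {poly K}.
Hypothesis hv : size v = 2%N.
Implicit Types (P Q w W H : {poly K}) (r s : K).

Let vi := lin_inv v.

Lemma lead_v : lead_coef v = v`_1.
Proof. by rewrite lead_coefE hv. Qed.

Lemma vvi : v \Po vi = 'X.
Proof.
rewrite (lin_comp _ _ _ hv) /vi /lin_inv lead_v scalerA mulfV ?lin_neq0 // scale1r.
by rewrite addrNK.
Qed.

Lemma viv : vi \Po v = 'X.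
Proof.
rewrite /vi /lin_inv comp_polyZ comp_polyB comp_polyX comp_polyC.
rewrite lead_v [X in X - _](linE _ _ hv) addrK scalerA mulVf ?lin_neq0 // scale1r //.
Qed.

Lemma vi_lin : vi = (v`_1)^-1 *: 'X + (- ((v`_1)^-1 * v`_0))%:P.
Proof. by rewrite /vi /lin_inv lead_v scalerBr polyCN polyCM mul_polyC. Qed.

Lemma size_vi : size vi = 2%N.
Proof. by rewrite vi_lin size_lin // invr_eq0 lin_neq0. Qed.

Definition cj w := v \Po (w \Po vi).

Lemma cjK w : vi \Po (cj w \Po v) = w.
Proof. by rewrite /cj !comp_polyA viv comp_polyX -!comp_polyA viv comp_polyXr. Qed.

Lemma cjE W : cj (vi \Po (W \Po v)) = W.
Proof. by rewrite /cj !comp_polyA vvi comp_polyX -!comp_polyA vvi comp_polyXr. Qed.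

Lemma cjM w1 w2 : cj (w1 \Po w2) = cj w1 \Po cj w2.
Proof.
rewrite /cj !comp_polyA; congr (_ \Po _).
by rewrite -[((v \Po w1) \Po vi) \Po v]comp_polyA viv comp_polyXr.
Qed.

Lemma cj_inj w1 w2 : cj w1 = cj w2 -> w1 = w2.
Proof. by move=> E; rewrite -(cjK w1) E cjK. Qed.

Lemma size_cj w : size w = 2%N -> size (cj w) = 2%N.
Proof. by move=> hw; rewrite /cj size_comp_poly2 // size_comp_poly2 // size_vi. Qed.

Lemma size_uncj W : size W = 2%N -> size (vi \Po (W \Po v)) = 2%N.
Proof. by move=> hw; rewrite size_comp_poly2 ?size_vi // size_comp_poly2. Qed.
Lemma cj_v W : cj (W \Po v) = v \Po W.
Proof. by rewrite /cj -comp_polyA vvi comp_polyXr. Qed.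
End H5.


Section H6.
Variable K : fieldType.
Hypothesis charK : [pchar K] =i pred0.
Variables u v l : {poly K}.
Hypotheses (hu : size u = 2%N) (hv : size v = 2%N) (hl : size l = 2%N).
Variable e : nat.
Local Notation d := e.+2.
Local Notation F := (u \Po ('X^d \Po v)).
Local Notation U := (v \Po u).
Local Notation L := (cj K v l).
Local Notation m := (L \Po U).

Lemma hU : size U = 2%N. Proof. by rewrite size_comp_poly2. Qed.
Lemma hm : size m = 2%N. Proof. by rewrite size_comp_poly2 ?hU // (size_cj _ _ hv). Qed.

Lemma cjF : cj K v F = U \Po 'X^d.
Proof. by rewrite comp_polyA (cj_v _ _ hv) comp_polyA. Qed.

Lemma UXd H : (U \Po 'X^d) \Po H = U`_1 *: H ^+ d + (U`_0)%:P.
Proof. by rewrite -comp_polyA comp_Xn_poly (lin_comp _ _ _ hU). Qed.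

Lemma sol_analysis (a b : {poly K}) : size a = 2%N -> size b = 2%N ->
  F \Po (l \Po (F \Po b)) = a \Po (F \Po F) ->
  (cj K v b)`_0 = 0 /\ m`_0 * U`_1 = m`_1 * ((cj K v b)`_1) ^+ d * U`_0.
Proof.
move=> ha hb E.
have cF := cjF.
move: (u \Po ('X^d \Po v)) E cF => F0 E cF.
have E' := congr1 (cj K v) E.
rewrite !(cjM _ _ hv) cF in E'.
set α := U`_1 in E'; set β := U`_0 in E'.
set b' := cj K v b in E' *; set a' := cj K v a in E'.
have hb' : size b' = 2%N by rewrite (size_cj _ _ hv).
have ha' : size a' = 2%N by rewrite (size_cj _ _ hv).
rewrite !UXd (lin_comp _ _ _ ha') -/α -/β in E'.
rewrite -[α *: b' ^+ d + β%:P](lin_comp _ _ _ hU) comp_polyA (lin_comp _ _ _ hm) (lin_comp _ _ _ hU) in E'.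
set Z := (m`_1 *: b' ^+ d + (m`_0)%:P) ^+ d in E'.
set W := (α *: 'X^d + β%:P) ^+ d in E'.
have α0 : α != 0 by apply: lin_neq0; exact: hU.
have EZ : Z = a'`_1 *: W + (α^-1 * (a'`_1 * β + a'`_0 - β))%:P.
  apply: (scalerI α0).
  have -> : α *: Z = (α *: Z + β%:P) - β%:P by rewrite addrK.
  rewrite E' -!mul_polyC polyCM [X in _ = X]mulrDr [X in _ = _ + X]mulrA -polyCM mulfV // polyC1 mul1r.
  rewrite !polyCD ?polyCB ?polyCN polyCM; ring.
move: EZ; rewrite /Z /W [in X in X = _](linE _ _ hb') => EZ.
have := @key K charK e _ _ _ _ _ _ _ _ α0 (lin_neq0 _ _ hm) (lin_neq0 _ _ hb') EZ.
by case=> -> ->.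
Qed.
End H6.


Lemma a_det (K : fieldType) (a1 a2 H : {poly K}) : (1 < size H)%N ->
  a1 \Po H = a2 \Po H -> a1 = a2.
Proof.
move=> sH E; apply/eqP; rewrite -subr_eq0 -(comp_poly_eq0 _ sH) comp_polyB E.
by rewrite subrr.
Qed.

Lemma size_FF (K : fieldType) (u v : {poly K}) e : size u = 2%N -> size v = 2%N ->
  (1 < size ((u \Po ('X^(e.+2) \Po v)) \Po (u \Po ('X^(e.+2) \Po v))))%N.
Proof.
move=> hu hv.
have hF : (size (u \Po ('X^(e.+2) \Po v))).-1 = e.+2.
  by rewrite size_comp_poly comp_Xn_poly size_exp hu hv mul1n mul1n.
have : (size ((u \Po ('X^(e.+2) \Po v)) \Po (u \Po ('X^(e.+2) \Po v)))).-1 = (e.+2 * e.+2)%N.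
  by rewrite size_comp_poly hF.
by case: (size _) => //= n ->.
Qed.

Theorem lemma4p2 (K : fieldType) (charK : [pchar K] =i pred0)
    (u v l : {poly K}) (d : nat)
    (hu : size u = 2%N) (hv : size v = 2%N) (hl : size l = 2%N)
    (hd : (1 < d)%N) :
  let F := u \Po ('X^d \Po v) in
  (~ exists s : seq ({poly K} * {poly K}),
       forall a b : {poly K}, size a = 2%N -> size b = 2%N ->
         F \Po (l \Po (F \Po b)) = a \Po (F \Po F) -> (a, b) \in s)
  <->
  (exists eps delta : K, eps != 0 /\ delta != 0 /\
     F = lin_inv v \Po ((eps *: 'X^d) \Po v) /\
     l = lin_inv v \Po ((delta *: 'X) \Po v)).
Proof.
move=> F; rewrite {}/F.
case: d hd => [|[|e]] // _.
set F := u \Po ('X^(e.+2) \Po v).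
split.
- move=> Hinf.
  have H' : forall s : seq ({poly K} * {poly K}), exists a b : {poly K},
      [/\ size a = 2%N, size b = 2%N,
       F \Po (l \Po (F \Po b)) = a \Po (F \Po F) & (a, b) \notin s].
    move=> s; apply: Classical_Prop.NNPP => hn; apply: Hinf; exists s => a b ha hb he.
    case: (boolP ((a, b) \in s)) => // hni; exfalso; apply: hn; exists a, b; by split.
  have hU := hU _ _ _ hu hv; have hm := hm _ _ _ _ hu hv hl.
  set U := v \Po u in hU *; set L := cj K v l in hm *.
  set α := U`_1; set β := U`_0; set p := (L \Po U)`_1; set q := (L \Po U)`_0.
  have α0 : α != 0 by apply: lin_neq0.
  have p0 : p != 0 by apply: lin_neq0.
  have Hsol (a b : {poly K}) : size a = 2%N -> size b = 2%N ->
      F \Po (l \Po (F \Po b)) = a \Po (F \Po F) ->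
      (cj K v b)`_0 = 0 /\ q * α = p * ((cj K v b)`_1) ^+ e.+2 * β.
    exact: (@sol_analysis K charK u v l hu hv hl e a b).
  case: (boolP ((β == 0) && (q == 0))) => [/andP [/eqP hb0 /eqP hq0] | hne].
    exists α, (p / α); split => //; split; first by rewrite mulf_neq0 ?invr_eq0.
    split.
      apply: (cj_inj _ _ hv); rewrite (cjE _ _ hv) /F (cjF _ _ _ hv) -/U (lin_comp _ _ _ hU).
      by rewrite -/α -/β hb0 polyC0 addr0.
    apply: (cj_inj _ _ hv); rewrite (cjE _ _ hv) -/L.
    have hUi : U \Po (α^-1 *: 'X) = 'X.
      by rewrite (lin_comp _ _ _ hU) -/α -/β hb0 polyC0 addr0 scalerA mulfV // scale1r.
    have -> : L = (L \Po U) \Po (α^-1 *: 'X) by rewrite -comp_polyA hUi comp_polyXr.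
    rewrite (lin_comp _ _ _ hm) -/p -/q hq0 polyC0 addr0.
    by rewrite scalerA.
  exfalso.
  have [a0 [b0 [ha0 hb0 he0 _]]] := H' [::].
  have β0 : β != 0.
    apply/negP => /eqP hb; move: hne; rewrite hb eqxx /=.
    have [_ ] := Hsol a0 b0 ha0 hb0 he0; rewrite hb mulr0 => /eqP.
    by rewrite mulf_eq0 (negPf α0) orbF => ->.
  set k := q * α / (p * β).
  set R := fun x : {poly K} * {poly K} => (cj K v x.2)`_1.
  have Hroot (a b : {poly K}) : size a = 2%N -> size b = 2%N ->
      F \Po (l \Po (F \Po b)) = a \Po (F \Po F) -> root ('X^(e.+2) - k%:P) (R (a, b)).
    move=> ha hb he; have [_ E] := Hsol a b ha hb he.
    rewrite /root !hornerE /k E /R /=; apply/eqP; field.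
    by rewrite p0 β0.
  have Hn : forall n, exists t : seq ({poly K} * {poly K}), [/\ size t = n, uniq (map R t) &
      forall x, x \in t -> [/\ size x.1 = 2%N, size x.2 = 2%N & F \Po (l \Po (F \Po x.2)) = x.1 \Po (F \Po F)]].
    elim=> [|n [t [st ut Ht]]]; first by exists [::].
    have [a [b [ha hb he hni]]] := H' t.
    exists ((a, b) :: t); split; [by rewrite /= st | | by move=> x; rewrite inE => /orP [/eqP -> //|]; apply: Ht].
    rewrite /= ut andbT; apply/negP => /mapP [[a2 b2] hin hR]; have [ha2 hb2 he2] := Ht _ hin.
    have [c0 _] := Hsol a b ha hb he; have [c2 _] := Hsol a2 b2 ha2 hb2 he2.
    have eb : b = b2.
      apply: (cj_inj _ _ hv).
      rewrite (linE _ _ (size_cj _ _ hv _ hb)) (linE _ _ (size_cj _ _ hv _ hb2)).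
      by rewrite c0 c2; move: hR; rewrite /R /= => ->.
    subst b2.
    have ea : a = a2 by apply: (a_det _ _ _ _ (size_FF _ _ _ e hu hv)); rewrite -he -he2.
    by subst a2; move: hni; rewrite hin.
  have [t [st ut Ht]] := Hn e.+3.
  have nz : 'X^(e.+2) - k%:P != 0 by rewrite -size_poly_eq0 size_XnsubC.
  have := max_poly_roots nz _ ut.
  rewrite size_map st size_XnsubC // ltnn => H; suff : false by []; apply: H.
  apply/allP => r /mapP [[a b] /Ht [ha hb he] ->].
  exact: Hroot.
- move=> [eps [delta [he [hde [EF El]]]]] [s Hs].
  have [r [r0 hr]] := fresh _ charK [seq (cj K v x.2)`_1 | x <- s].
  set c := delta ^+ e.+2 * r ^+ (e.+2 * e.+2).
  set b := lin_inv v \Po ((r *: 'X) \Po v).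
  set a := lin_inv v \Po ((c *: 'X) \Po v).
  have hX x : x != 0 -> size (x *: 'X : {poly K}) = 2%N.
    by move=> x0; rewrite -[x *: 'X]addr0 -polyC0 size_lin.
  have c0 : c != 0 by rewrite mulf_neq0 // expf_neq0.
  have := Hs a b (size_uncj _ _ hv _ (hX _ c0)) (size_uncj _ _ hv _ (hX _ r0)).
  have -> : F \Po (l \Po (F \Po b)) = a \Po (F \Po F).
    have gen : forall F0 l0 a0 b0 : {poly K}, cj K v F0 = eps *: 'X^(e.+2) ->
        cj K v l0 = delta *: 'X -> cj K v a0 = c *: 'X -> cj K v b0 = r *: 'X ->
        F0 \Po (l0 \Po (F0 \Po b0)) = a0 \Po (F0 \Po F0).
      move=> F0 l0 a0 b0 cF cl ca cb.
      apply: (cj_inj _ _ hv); rewrite !(cjM _ _ hv) cF cl ca cb.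
      rewrite !comp_polyZ !comp_Xn_poly !comp_polyX !exprZn !scalerA -!exprM.
      by congr (_ *: _); rewrite /c; ring.
    by apply: gen; rewrite ?EF ?El (cjE _ _ hv).
  move=> /(_ erefl) hin; move: hr; rewrite (_ : r = (cj K v b)`_1).
    by rewrite (map_f (fun x => (cj K v x.2)`_1) hin).
  by rewrite /b (cjE _ _ hv) coefZ coefX mulr1.
Qed.
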